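(* Let $\mathcal{M}$, $\mathcal{N}$ be $\Bbbk$-linear categories admitting small coproducts and $F:\mathcal{M}\to\mathcal{N}$ a linear functor such that $\widehat{F}_{X,M}$ is invertible for all $X\in\mathbf{Vec}$, $M\in\mathcal{M}$. Then $F$ preserves small coproducts if one of the following holds: (1) $\mathcal{M}$ and $\mathcal{N}$ are abelian and $F$ is right exact; (2) $\mathcal{M}$ and $\mathcal{N}$ are Ab4 abelian categories and $F$ is left exact.
   Context: A linear category is a category enriched over $\mathbf{Vec}$. In a linear category with small coproducts, the copower $X\otimes M$ ($X\in\mathbf{Vec}$) represents $\mathrm{Hom}_\Bbbk(X,\mathrm{Hom}(M,-))$, with $\Bbbk\otimes M=M$; for $x\in X$, $\underline{x}:\Bbbk\to X$ is $1\mapsto x$. For a linear functor $F$, $\widehat{F}_{X,M}:X\otimes F(M)\to F(X\otimes M)$ is the morphism corresponding under $\mathrm{Hom}(X\otimes F(M),F(X\otimes M))\cong\mathrm{Hom}_\Bbbk(X,\mathrm{Hom}(F(M),F(X\otimes M)))$ to $x\mapsto F(\underline{x}\otimes\mathrm{id}_M)$. An abelian category is Ab4 if it has small coproducts and coproducts are exact. *)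

(* Defs.v *)
From HB Require Import structures.
From mathcomp Require Import all_boot all_order all_algebra.
Set Implicit Arguments. Unset Strict Implicit. Unset Printing Implicit Defensive.
Import GRing.Theory.
Local Open Scope ring_scope.

Record linCat (k : fieldType) := LinCat {
  Obj : Type;
  Hom : Obj -> Obj -> lmodType k;
  comp : forall A B C : Obj, Hom B C -> Hom A B -> Hom A C;
  idm : forall A : Obj, Hom A A;
  compA : forall A B C D (h : Hom C D) (g : Hom B C) (f : Hom A B),
      comp h (comp g f) = comp (comp h g) f;
  comp1l : forall A B (f : Hom A B), comp (idm B) f = f;
  comp1r : forall A B (f : Hom A B), comp f (idm A) = f;
  comp_linl : forall A B C (a : k) (f g : Hom B C) (h : Hom A B),
      comp (a *: f + g) h = a *: comp f h + comp g h;
  comp_linr : forall A B C (a : k) (h : Hom B C) (f g : Hom A B),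
      comp h (a *: f + g) = a *: comp h f + comp h g
}.
Arguments Obj {k}.
Arguments Hom {k} l.
Arguments comp {k l A B C}.
Arguments idm {k l}.

Record linFunctor (k : fieldType) (M N : linCat k) := LinFunctor {
  Fo : Obj M -> Obj N;
  Fm : forall A B : Obj M, Hom M A B -> Hom N (Fo A) (Fo B);
  Fm_comp : forall A B C (g : Hom M B C) (f : Hom M A B),
      Fm (comp g f) = comp (Fm g) (Fm f);
  Fm_id : forall A, Fm (idm A) = idm (Fo A);
  Fm_lin : forall A B (a : k) (f g : Hom M A B), Fm (a *: f + g) = a *: Fm f + Fm g
}.
Arguments Fo {k M N}.
Arguments Fm {k M N} l {A B}.

Section Cat.
Variables (k : fieldType) (C : linCat k).

Definition is_iso (A B : Obj C) (f : Hom C A B) : Prop :=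
  exists g : Hom C B A, comp g f = idm A /\ comp f g = idm B.

Definition is_mono (A B : Obj C) (f : Hom C A B) : Prop :=
  forall D (g h : Hom C D A), comp f g = comp f h -> g = h.

Definition is_epi (A B : Obj C) (f : Hom C A B) : Prop :=
  forall D (g h : Hom C B D), comp g f = comp h f -> g = h.

Definition is_coproduct (I : Type) (A : I -> Obj C) (P : Obj C)
    (inj : forall i, Hom C (A i) P) : Prop :=
  forall (D : Obj C) (f : forall i, Hom C (A i) D),
    exists! u : Hom C P D, forall i, comp u (inj i) = f i.

Definition is_product (I : Type) (A : I -> Obj C) (P : Obj C)
    (pr : forall i, Hom C P (A i)) : Prop :=
  forall (D : Obj C) (f : forall i, Hom C D (A i)),
    exists! u : Hom C D P, forall i, comp (pr i) u = f i.

Definition has_small_coproducts : Prop :=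
  forall (I : Type) (A : I -> Obj C), exists (P : Obj C) (inj : forall i, Hom C (A i) P), is_coproduct inj.

Definition is_zero_object (Z : Obj C) : Prop :=
  (forall A (f g : Hom C Z A), f = g) /\ (forall A (f g : Hom C A Z), f = g).

Definition is_kernel (A B : Obj C) (f : Hom C A B) (K : Obj C) (i : Hom C K A) : Prop :=
  comp f i = 0 /\
  forall D (g : Hom C D A), comp f g = 0 -> exists! u : Hom C D K, comp i u = g.

Definition is_cokernel (A B : Obj C) (f : Hom C A B) (Q : Obj C) (q : Hom C B Q) : Prop :=
  comp q f = 0 /\
  forall D (g : Hom C B D), comp g f = 0 -> exists! u : Hom C Q D, comp u q = g.

Definition is_abelian : Prop :=
  (exists Z, is_zero_object Z) /\
  (forall A : bool -> Obj C, exists (P : Obj C) (pr : forall i, Hom C P (A i)), is_product pr) /\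
  (forall A : bool -> Obj C, exists (P : Obj C) (inj : forall i, Hom C (A i) P), is_coproduct inj) /\
  (forall A B (f : Hom C A B), exists (K : Obj C) (i : Hom C K A), is_kernel f i) /\
  (forall A B (f : Hom C A B), exists (Q : Obj C) (q : Hom C B Q), is_cokernel f q) /\
  (forall A B (f : Hom C A B), is_mono f ->
     exists D (g : Hom C B D), is_kernel g f) /\
  (forall A B (f : Hom C A B), is_epi f ->
     exists D (g : Hom C D A), is_cokernel g f).

(* Grothendieck's AB4: abelian, small coproducts exist, and coproducts are
   exact, i.e. a coproduct of monomorphisms is a monomorphism. *)
Definition is_Ab4 : Prop :=
  [/\ is_abelian, has_small_coproducts &
      forall (I : Type) (A B : I -> Obj C) (f : forall i, Hom C (A i) (B i))
             PA (iA : forall i, Hom C (A i) PA) PB (iB : forall i, Hom C (B i) PB)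
             (u : Hom C PA PB),
        is_coproduct iA -> is_coproduct iB ->
        (forall i, is_mono (f i)) ->
        (forall i, comp u (iA i) = comp (iB i) (f i)) ->
        is_mono u].

Definition islinear (X Y : lmodType k) (f : X -> Y) : Prop :=
  forall (a : k) (x y : X), f (a *: x + y) = a *: f x + f y.

(* (P, eta) is a copower X (x) M: P represents Hom_k(X, Hom(M, -)) with
   universal element eta : X -> Hom(M, P) (eta x = underline(x) (x) id_M,
   using k (x) M = M). *)
Definition is_copower (X : lmodType k) (M P : Obj C) (eta : X -> Hom C M P) : Prop :=
  islinear eta /\
  forall (N : Obj C) (phi : X -> Hom C M N), islinear phi ->
    exists! g : Hom C P N, forall x, comp g (eta x) = phi x.

End Cat.

Section Fun.
Variables (k : fieldType) (M N : linCat k) (F : linFunctor M N).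

(* hat F_{X,M} is invertible for all X, M: for any copowers P = X (x) M in M
   and Q = X (x) F(M) in N, the morphism Q -> F(P) corresponding to
   x |-> F(underline(x) (x) id_M) is an isomorphism. *)
Definition hatF_invertible : Prop :=
  forall (X : lmodType k) (A : Obj M) (P : Obj M) (eta : X -> Hom M A P)
         (Q : Obj N) (theta : X -> Hom N (Fo F A) Q) (g : Hom N Q (Fo F P)),
    is_copower eta -> is_copower theta ->
    (forall x, comp g (theta x) = Fm F (eta x)) ->
    is_iso g.

Definition preserves_small_coproducts : Prop :=
  forall (I : Type) (A : I -> Obj M) (P : Obj M) (inj : forall i, Hom M (A i) P),
    is_coproduct inj -> is_coproduct (fun i => Fm F (inj i)).

Definition right_exact : Prop :=
  forall A B (f : Hom M A B) Q (q : Hom M B Q),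
    is_cokernel f q -> is_cokernel (Fm F f) (Fm F q).

Definition left_exact : Prop :=
  forall A B (f : Hom M A B) K (i : Hom M K A),
    is_kernel f i -> is_kernel (Fm F f) (Fm F i).

End Fun.

(* Main.v *)
From Pilot Require Import Defs.
From mathcomp Require Import all_boot all_order all_algebra.
From mathcomp Require Import finmap boolp.
From Stdlib Require Import ClassicalEpsilon.
From mathcomp.multinomials Require Import monalg.
Import Pilot.Defs.
Set Implicit Arguments. Unset Strict Implicit. Unset Printing Implicit Defensive.
Import GRing.Theory.
Local Open Scope fset_scope.
Local Open Scope ring_scope.

Section Lin.
Variable k : fieldType.

Lemma lin0 (X Y : lmodType k) (f : X -> Y) : islinear f -> f 0 = 0.
Proof.
move=> H; have e := H 1 0 0; rewrite !scale1r addr0 in e.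
by apply: (addrI (f 0)); rewrite addr0 -e.
Qed.

Lemma linD (X Y : lmodType k) (f : X -> Y) : islinear f -> forall x y : X, f (x + y) = f x + f y.
Proof. by move=> H x y; have := H 1 x y; rewrite !scale1r. Qed.

Lemma linZ (X Y : lmodType k) (f : X -> Y) : islinear f -> forall a (x : X), f (a *: x) = a *: f x.
Proof. by move=> H a x; have := H a x 0; rewrite addr0 (lin0 H) addr0. Qed.

Lemma lin_sum (X Y : lmodType k) (f : X -> Y) (T : Type) (s : seq T) (G : T -> X) :
  islinear f -> f (\sum_(i <- s) G i) = \sum_(i <- s) f (G i).
Proof.
move=> H; elim: s => [|a s IH]; first by rewrite !big_nil (lin0 H).
by rewrite !big_cons (linD H) IH.
Qed.

Variable C : linCat k.

Lemma compr_lin (A B D : Obj C) (h : Hom C B D) : islinear (fun f : Hom C A B => comp h f).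
Proof. by move=> a f g; rewrite comp_linr. Qed.

Lemma compl_lin (A B D : Obj C) (h : Hom C A B) : islinear (fun f : Hom C B D => comp f h).
Proof. by move=> a f g; rewrite comp_linl. Qed.

Lemma coprod_uniq (I : Type) (A : I -> Obj C) P (inj : forall i, Hom C (A i) P) D
  (u1 u2 : Hom C P D) : is_coproduct inj ->
  (forall i, comp u1 (inj i) = comp u2 (inj i)) -> u1 = u2.
Proof.
move=> H e; have [w [_ Hw]] := H D (fun i => comp u2 (inj i)).
by rewrite -(Hw u1 e) -(Hw u2 (fun i => erefl)).
Qed.

Section Copow.
Variables (I : Type) (B Q : Obj C) (j : forall i : I, Hom C B Q).
Hypothesis Hj : is_coproduct (A := fun _ => B) j.

Definition etaQ (x : {malg k[{classic I}]}) : Hom C B Q :=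
  \sum_(i <- msupp x) x@_i *: j i.

Lemma etaQ_w x (d : {fset {classic I}}) : msupp x `<=` d ->
  etaQ x = \sum_(i <- d) x@_i *: j i.
Proof.
move=> sub; rewrite /etaQ; apply: big_fset_incl => // i _ ni.
by rewrite mcoeff_outdom // scale0r.
Qed.

Lemma etaQ_lin : islinear etaQ.
Proof.
move=> a x y.
have s1 : msupp x `<=` msupp x `|` msupp y by apply: fsubsetUl.
have s2 : msupp y `<=` msupp x `|` msupp y by apply: fsubsetUr.
have s3 : msupp (a *: x + y) `<=` msupp x `|` msupp y.
  apply: fsubset_trans (msuppD_le _ _) _; apply: fsetUSS => //.
  exact: msuppZ_le.
rewrite (etaQ_w s1) (etaQ_w s2) (etaQ_w s3) scaler_sumr -big_split /=.
by apply: eq_bigr => i _; rewrite mcoeffD mcoeffZ scalerDl scalerA.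
Qed.

Lemma etaQ_U (i : I) : etaQ << (1 : k) *g (i : {classic I}) >> = j i.
Proof.
rewrite /etaQ msuppU oner_eq0 big_seq_fset1 mcoeffUU scale1r //.
Qed.

Lemma etaQ_copower : is_copower etaQ.
Proof.
split; first exact: etaQ_lin.
move=> N phi Hphi.
have [g [Hg Hu]] := Hj (fun i => phi << (1 : k) *g (i : {classic I}) >>).
exists g; split.
  move=> x; rewrite /etaQ (lin_sum _ _ (compr_lin (A:=B) g)).
  rewrite {3}(monalgE x) (lin_sum _ _ Hphi); apply: eq_bigr => i _.
  rewrite (linZ (compr_lin (A:=B) g)) Hg -(linZ Hphi); congr (phi _).
  by apply/malgP => l; rewrite mcoeffZ !mcoeffU mulr_natr.
move=> g' Hg'; apply: Hu => i; by rewrite -etaQ_U.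
Qed.

End Copow.
End Lin.

Section Delta.
Variables (k : fieldType) (C : linCat k) (I : Type) (A : I -> Obj C).

Definition pdelta (i j : I) : Hom C (A j) (A i) :=
  match pselect (j = i) with
  | left e => eq_rect j (fun l => Hom C (A j) (A l)) (idm (A j)) i e
  | right _ => 0
  end.

Lemma pdelta_ii i : pdelta i i = idm (A i).
Proof.
rewrite /pdelta; case: (pselect (i = i)) => [e|]; last by [].
by rewrite (Prop_irrelevance e erefl).
Qed.
End Delta.

Theorem lemma2p6 (k : fieldType) (M N : linCat k) (F : linFunctor M N) :
  has_small_coproducts M -> has_small_coproducts N ->
  hatF_invertible F ->
  ((is_abelian M /\ is_abelian N /\ right_exact F) \/
   (is_Ab4 M /\ is_Ab4 N /\ left_exact F)) ->
  preserves_small_coproducts F.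
Proof.
move=> hM hN hF _ I A P inj Hcop D f.
have [Q [jQ HQ]] := hM I (fun _ => P).
have [Q' [jQ' HQ']] := hN I (fun _ => Fo F P).
have [g [Hg _]] := HQ' (Fo F Q) (fun i => Fm F (jQ i)).
have Hgeta : forall x, comp g (etaQ jQ' x) = Fm F (etaQ jQ x).
  move=> x; rewrite /etaQ (lin_sum _ _ (compr_lin (A:=Fo F P) g)).
  rewrite (lin_sum _ _ (@Fm_lin _ _ _ F _ _)); apply: eq_bigr => i _.
  by rewrite (linZ (compr_lin (A:=Fo F P) g)) (linZ (@Fm_lin _ _ _ F _ _)) Hg.
have [h [hg gh]] := hF _ _ _ _ _ _ g (etaQ_copower HQ) (etaQ_copower HQ') Hgeta.
pose p i := proj1_sig (constructive_indefinite_description _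
   (Hcop (A i) (pdelta A i))).
have Hp : forall i l, comp (p i) (inj l) = pdelta A i l.
  move=> i l; rewrite /p; case: constructive_indefinite_description => /= x [Hx _].
  exact: Hx.
have [s [Hs _]] := Hcop Q (fun i => comp (jQ i) (inj i)).
have [r [Hr _]] := HQ P (fun i => comp (inj i) (p i)).
have rs : comp r s = idm P.
  apply: (coprod_uniq Hcop) => i.
  by rewrite -compA Hs compA Hr -compA Hp pdelta_ii comp1r comp1l.
have [v [Hv _]] := HQ' D (fun i => comp (f i) (Fm F (p i))).
exists (comp v (comp h (Fm F s))); split.
  move=> i; rewrite -!compA -Fm_comp Hs Fm_comp -Hg.
  rewrite -(compA g) (compA h) hg comp1l compA Hv -compA -Fm_comp Hp pdelta_ii Fm_id comp1r //.
move=> u' Hu'.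
have wv : comp (comp u' (Fm F r)) g = v.
  apply: (coprod_uniq HQ') => i.
  rewrite Hv -!compA Hg -Fm_comp Hr Fm_comp compA Hu' //.
rewrite -wv -[u' in RHS]comp1r -Fm_id -rs Fm_comp.
by rewrite -!compA (compA g h) gh comp1l.
Qed.
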